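(* Let $X$ be a normed space and $Y$ a Banach space, and let $l\in\{-1,1\}$. Suppose that an odd mapping $f:X\to Y$ satisfies $\|D_f(x,y)\|\le\phi(x,y)$ for all $x,y\in X$, where $\phi:X\times X\to[0,\infty)$ is a function such that $$\sum_{i=1}^{\infty}8^{il}\phi\left(\frac{x}{2^{il}},\frac{x}{2^{il}}\right)<\infty$$ for all $x\in X$ and $\lim_{n\to\infty}8^{ln}\phi\left(\frac{x}{2^{ln}},\frac{y}{2^{ln}}\right)=0$ for all $x,y\in X$. Then the limit $$C(x)=\lim_{n\to\infty}8^{ln}\left[f\left(\frac{x}{2^{l(n-l)}}\right)-2f\left(\frac{x}{2^{ln}}\right)\right]$$ exists for all $x\in X$, and $C:X\to Y$ is the unique cubic mapping which satisfies $$3C(x+3y)-C(3x+y)=12[C(x+y)+C(x-y)]-16[C(x)+C(y)]+12C(2y)-4C(2x)\quad(x,y\in X)$$ and $$\|f(2x)-2f(x)-C(x)\|\le\frac12\sum_{i=\frac{|l-1|}{2}}^{\infty}8^{il}\phi\left(\frac{x}{2^{l(i+l)}},\frac{x}{2^{l(i+l)}}\right)$$ for all $x\in X$ (the summation starts at $i=0$ if $l=1$ and at $i=1$ if $l=-1$).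
   Context: For a mapping $f:X\to Y$ define $$D_f(x,y)=3f(x+3y)-f(3x+y)-12[f(x+y)+f(x-y)]+16[f(x)+f(y)]-12f(2y)+4f(2x)$$ for $x,y\in X$. A mapping $g:X\to Y$ is called cubic if $g(x+2y)-3g(x+y)+3g(x)-g(x-y)=6g(y)$ for all $x,y\in X$. *)

(* Defs.v *)
From HB Require Import structures.
From mathcomp Require Import all_boot all_order all_algebra.
From mathcomp Require Import all_classical all_reals all_analysis.
Set Implicit Arguments. Unset Strict Implicit. Unset Printing Implicit Defensive.
Import Order.TTheory GRing.Theory Num.Theory.
Import numFieldNormedType.Exports.
Local Open Scope ring_scope.

Definition Dmap (R : numDomainType) (X Y : lmodType R) (f : X -> Y) (x y : X) : Y :=
  3 *: f (x + 3 *: y) - f (3 *: x + y) - 12 *: (f (x + y) + f (x - y))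
  + 16 *: (f x + f y) - 12 *: f (2 *: y) + 4 *: f (2 *: x).

Definition cubic (R : numDomainType) (X Y : lmodType R) (g : X -> Y) : Prop :=
  forall x y : X, g (x + 2 *: y) - 3 *: g (x + y) + 3 *: g x - g (x - y) = 6 *: g y.

(* Main.v *)
Require Import Defs.
From HB Require Import structures.
From mathcomp Require Import all_boot all_order all_algebra.
From mathcomp Require Import all_classical all_reals all_analysis.
From mathcomp Require Import ring lra zify.
Import Order.TTheory GRing.Theory Num.Theory.
Import numFieldNormedType.Exports.
Local Open Scope classical_set_scope.
Local Open Scope ring_scope.
Set Implicit Arguments. Unset Strict Implicit. Unset Printing Implicit Defensive.
Section Lin.
Variables (R : numFieldType) (V : lmodType R) (a1 a2 a3 a4 a5 a6 a7 a8 : V).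
Definition lc (r1 r2 r3 r4 r5 r6 r7 r8 : R) : V :=
  r1 *: a1 + (r2 *: a2 + (r3 *: a3 + (r4 *: a4 + (r5 *: a5 + (r6 *: a6 + (r7 *: a7 + r8 *: a8)))))).
Lemma lcD r1 r2 r3 r4 r5 r6 r7 r8 q1 q2 q3 q4 q5 q6 q7 q8 :
  lc r1 r2 r3 r4 r5 r6 r7 r8 + lc q1 q2 q3 q4 q5 q6 q7 q8 =
  lc (r1+q1) (r2+q2) (r3+q3) (r4+q4) (r5+q5) (r6+q6) (r7+q7) (r8+q8).
Proof.
rewrite /lc !scalerDl; do 7 (rewrite addrACA; congr (_ + _)).
Qed.
Lemma lcZ k r1 r2 r3 r4 r5 r6 r7 r8 :
  k *: lc r1 r2 r3 r4 r5 r6 r7 r8 =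
  lc (k*r1) (k*r2) (k*r3) (k*r4) (k*r5) (k*r6) (k*r7) (k*r8).
Proof. by rewrite /lc !scalerDr !scalerA. Qed.
Lemma lcN r1 r2 r3 r4 r5 r6 r7 r8 :
  - lc r1 r2 r3 r4 r5 r6 r7 r8 = lc (-r1) (-r2) (-r3) (-r4) (-r5) (-r6) (-r7) (-r8).
Proof. by rewrite /lc !opprD -!scaleNr. Qed.
Lemma lc0 : 0 = lc 0 0 0 0 0 0 0 0.
Proof. by rewrite /lc !scale0r !addr0. Qed.
Lemma la1 : a1 = lc 1 0 0 0 0 0 0 0. Proof. by rewrite /lc scale1r !scale0r ?addr0 ?add0r. Qed.
Lemma la2 : a2 = lc 0 1 0 0 0 0 0 0. Proof. by rewrite /lc scale1r !scale0r ?addr0 ?add0r. Qed.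
Lemma la3 : a3 = lc 0 0 1 0 0 0 0 0. Proof. by rewrite /lc scale1r !scale0r ?addr0 ?add0r. Qed.
Lemma la4 : a4 = lc 0 0 0 1 0 0 0 0. Proof. by rewrite /lc scale1r !scale0r ?addr0 ?add0r. Qed.
Lemma la5 : a5 = lc 0 0 0 0 1 0 0 0. Proof. by rewrite /lc scale1r !scale0r ?addr0 ?add0r. Qed.
Lemma la6 : a6 = lc 0 0 0 0 0 1 0 0. Proof. by rewrite /lc scale1r !scale0r ?addr0 ?add0r. Qed.
Lemma la7 : a7 = lc 0 0 0 0 0 0 1 0. Proof. by rewrite /lc scale1r !scale0r ?addr0 ?add0r. Qed.
Lemma la8 : a8 = lc 0 0 0 0 0 0 0 1. Proof. by rewrite /lc scale1r !scale0r ?addr0 ?add0r. Qed.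
Lemma lc_eq r1 r2 r3 r4 r5 r6 r7 r8 q1 q2 q3 q4 q5 q6 q7 q8 :
  r1 = q1 -> r2 = q2 -> r3 = q3 -> r4 = q4 -> r5 = q5 -> r6 = q6 -> r7 = q7 -> r8 = q8 ->
  lc r1 r2 r3 r4 r5 r6 r7 r8 = lc q1 q2 q3 q4 q5 q6 q7 q8.
Proof. by do 8 move=> ->. Qed.
Lemma lc_comb (k1 k2 : R) p1 p2 p3 p4 p5 p6 p7 p8 p1' p2' p3' p4' p5' p6' p7' p8'
  q1 q2 q3 q4 q5 q6 q7 q8 q1' q2' q3' q4' q5' q6' q7' q8'
  u1 u2 u3 u4 u5 u6 u7 u8 u1' u2' u3' u4' u5' u6' u7' u8' :
  lc p1 p2 p3 p4 p5 p6 p7 p8 = lc p1' p2' p3' p4' p5' p6' p7' p8' ->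
  lc q1 q2 q3 q4 q5 q6 q7 q8 = lc q1' q2' q3' q4' q5' q6' q7' q8' ->
  u1 - u1' = k1 * (p1 - p1') + k2 * (q1 - q1') ->
  u2 - u2' = k1 * (p2 - p2') + k2 * (q2 - q2') ->
  u3 - u3' = k1 * (p3 - p3') + k2 * (q3 - q3') ->
  u4 - u4' = k1 * (p4 - p4') + k2 * (q4 - q4') ->
  u5 - u5' = k1 * (p5 - p5') + k2 * (q5 - q5') ->
  u6 - u6' = k1 * (p6 - p6') + k2 * (q6 - q6') ->
  u7 - u7' = k1 * (p7 - p7') + k2 * (q7 - q7') ->
  u8 - u8' = k1 * (p8 - p8') + k2 * (q8 - q8') ->
  lc u1 u2 u3 u4 u5 u6 u7 u8 = lc u1' u2' u3' u4' u5' u6' u7' u8'.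
Proof.
move=> h1 h2 e1 e2 e3 e4 e5 e6 e7 e8.
apply/eqP; rewrite -subr_eq0; apply/eqP.
have -> : lc u1 u2 u3 u4 u5 u6 u7 u8 - lc u1' u2' u3' u4' u5' u6' u7' u8' =
  k1 *: (lc p1 p2 p3 p4 p5 p6 p7 p8 - lc p1' p2' p3' p4' p5' p6' p7' p8') +
  k2 *: (lc q1 q2 q3 q4 q5 q6 q7 q8 - lc q1' q2' q3' q4' q5' q6' q7' q8').
  rewrite !lcN !lcD !lcZ lcD; apply: lc_eq.
  1-8: assumption.
by rewrite h1 h2 !subrr !scaler0 addr0.
Qed.
Lemma comb_cubic :
  3 *: (8 *: a1) - 8 *: a6 - 12 *: (8 *: a5 - 8 *: a3) + 16 *: (- a4 + a2) - 12 *: (8 *: a2) + 4 *: - (8 *: a4) = 0 ->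
  3 *: - (8 *: a6) - - (8 *: a1) - 12 *: (- (8 *: a5) - 8 *: a3) + 16 *: (- a2 + a4) - 12 *: (8 *: a4) + 4 *: - (8 *: a2) = 0 ->
  a1 - 3 *: a2 + 3 *: a3 - a4 = 6 *: a5.
Proof.
move=> h1 h2; rewrite ?la1 ?la2 ?la3 ?la4 ?la5 ?la6 ?la7 ?la8 ?lc0 in h1 h2 *.
do 10 rewrite ?lcN ?lcZ ?lcD in h1 h2 *.
eapply (lc_comb (k1:=3/64) (k2:=-1/64)); [exact: h1|exact: h2|..]. all: field; done.
Qed.
Lemma comb_D :
  3 *: a1 - a2 - 12 *: (a3 + a4) + 16 *: (a5 + a6) - 12 *: a7 + 4 *: a8 =
  lc 3 (-1) (-12) (-12) 16 16 (-12) 4.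
Proof.
rewrite ?la1 ?la2 ?la3 ?la4 ?la5 ?la6 ?la7 ?la8.
do 10 rewrite ?lcN ?lcZ ?lcD. apply: lc_eq; ring.
Qed.
Lemma comb_Drearr :
  3 *: a1 - a2 - 12 *: (a3 + a4) + 16 *: (a5 + a6) - 12 *: a7 + 4 *: a8 = 0 ->
  3 *: a1 - a2 = 12 *: (a3 + a4) - 16 *: (a5 + a6) + 12 *: a7 - 4 *: a8.
Proof.
move=> h1; rewrite ?la1 ?la2 ?la3 ?la4 ?la5 ?la6 ?la7 ?la8 ?lc0 in h1 *.
do 10 rewrite ?lcN ?lcZ ?lcD in h1 *.
eapply (lc_comb (k1:=1) (k2:=0)); [exact: h1|exact: h1|..]. all: ring.
Qed.
Lemma comb_g0 : a5 - 3 *: a5 + 3 *: a5 - a5 = 6 *: a5 -> a5 = 0.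
Proof.
move=> h1; rewrite ?la1 ?la2 ?la3 ?la4 ?la5 ?la6 ?la7 ?la8 ?lc0 in h1 *.
do 10 rewrite ?lcN ?lcZ ?lcD in h1 *.
eapply (lc_comb (k1:=-1/6) (k2:=0)); [exact: h1|exact: h1|..]. all: field; done.
Qed.
Lemma comb_odd :
  a4 - 3 *: a2 + 3 *: a5 - a1 = 6 *: a2 ->
  a1 - 3 *: a5 + 3 *: a2 - a4 = 6 *: a1 -> a2 = - a1.
Proof.
move=> h1 h2; rewrite ?la1 ?la2 ?la3 ?la4 ?la5 ?la6 ?la7 ?la8 ?lc0 in h1 h2 *.
do 10 rewrite ?lcN ?lcZ ?lcD in h1 h2 *.
eapply (lc_comb (k1:=-1/6) (k2:=-1/6)); [exact: h1|exact: h2|..]. all: field; done.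
Qed.
Lemma comb_hom : a3 - 3 *: a1 - - a1 = 6 *: a1 -> a3 = 8 *: a1.
Proof.
move=> h1; rewrite ?la1 ?la2 ?la3 ?la4 ?la5 ?la6 ?la7 ?la8 ?lc0 in h1 *.
do 10 rewrite ?lcN ?lcZ ?lcD in h1 *.
eapply (lc_comb (k1:=1) (k2:=0)); [exact: h1|exact: h1|..]. all: ring.
Qed.
Lemma comb_key :
  3 *: a1 - a1 - 12 *: a2 + 16 *: (a3 + a3) - 12 *: a2 + 4 *: a2 =
  2 *: ((a1 - 2 *: a2) - 8 *: (a2 - 2 *: a3)).
Proof.
rewrite ?la1 ?la2 ?la3 ?la4 ?la5 ?la6 ?la7 ?la8.
do 10 rewrite ?lcN ?lcZ ?lcD. apply: lc_eq; ring.
Qed.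
End Lin.

Lemma lcA (R : numFieldType) (V : lmodType R) (a1 a2 a3 a4 a5 a6 a7 a8 b1 b2 b3 b4 b5 b6 b7 b8 : V) r1 r2 r3 r4 r5 r6 r7 r8 :
  lc a1 a2 a3 a4 a5 a6 a7 a8 r1 r2 r3 r4 r5 r6 r7 r8 + lc b1 b2 b3 b4 b5 b6 b7 b8 r1 r2 r3 r4 r5 r6 r7 r8 =
  lc (a1+b1) (a2+b2) (a3+b3) (a4+b4) (a5+b5) (a6+b6) (a7+b7) (a8+b8) r1 r2 r3 r4 r5 r6 r7 r8.
Proof. rewrite /lc !scalerDr; do 7 (rewrite addrACA; congr (_ + _)). Qed.
Lemma lcAZ (R : numFieldType) (V : lmodType R) (a1 a2 a3 a4 a5 a6 a7 a8 : V) k r1 r2 r3 r4 r5 r6 r7 r8 :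
  k *: lc a1 a2 a3 a4 a5 a6 a7 a8 r1 r2 r3 r4 r5 r6 r7 r8 =
  lc (k *: a1) (k *: a2) (k *: a3) (k *: a4) (k *: a5) (k *: a6) (k *: a7) (k *: a8) r1 r2 r3 r4 r5 r6 r7 r8.
Proof. by rewrite /lc !scalerDr !scalerA; do 8 rewrite [_ * k]mulrC. Qed.

Lemma lcAN (R : numFieldType) (V : lmodType R) (a1 a2 a3 a4 a5 a6 a7 a8 : V) r1 r2 r3 r4 r5 r6 r7 r8 :
  - lc a1 a2 a3 a4 a5 a6 a7 a8 r1 r2 r3 r4 r5 r6 r7 r8 =
  lc (- a1) (- a2) (- a3) (- a4) (- a5) (- a6) (- a7) (- a8) r1 r2 r3 r4 r5 r6 r7 r8.
Proof. by rewrite /lc !opprD -!scalerN. Qed.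
Lemma lc_atoms_eq (R : numFieldType) (V : lmodType R) (a1 a2 a3 a4 a5 a6 a7 a8 b1 b2 b3 b4 b5 b6 b7 b8 : V) r1 r2 r3 r4 r5 r6 r7 r8 :
  a1 = b1 -> a2 = b2 -> a3 = b3 -> a4 = b4 -> a5 = b5 -> a6 = b6 -> a7 = b7 -> a8 = b8 ->
  lc a1 a2 a3 a4 a5 a6 a7 a8 r1 r2 r3 r4 r5 r6 r7 r8 = lc b1 b2 b3 b4 b5 b6 b7 b8 r1 r2 r3 r4 r5 r6 r7 r8.
Proof. by do 8 move=> ->. Qed.

Lemma Dmap_lc (R : numFieldType) (X Y : lmodType R) (h : X -> Y) u v :
  Dmap h u v = lc (h (u + 3 *: v)) (h (3 *: u + v)) (h (u + v)) (h (u - v)) (h u) (h v)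
     (h (2 *: v)) (h (2 *: u)) 3 (-1) (-12) (-12) 16 16 (-12) 4.
Proof. exact: comb_D. Qed.

Section Phi.
Variables (R : numFieldType) (X Y : lmodType R) (x y : X).
Definition phi (a b : R) : X := a *: x + b *: y.
Lemma phiD a b c d : phi a b + phi c d = phi (a + c) (b + d).
Proof. by rewrite /phi !scalerDl addrACA. Qed.
Lemma phiN a b : - phi a b = phi (- a) (- b).
Proof. by rewrite /phi opprD -!scaleNr. Qed.
Lemma phiZ k a b : k *: phi a b = phi (k * a) (k * b).
Proof. by rewrite /phi scalerDr !scalerA. Qed.
Lemma ex : x = phi 1 0. Proof. by rewrite /phi scale1r scale0r addr0. Qed.
Lemma ey : y = phi 0 1. Proof. by rewrite /phi scale1r scale0r add0r. Qed.
Lemma e0 : 0 = phi 0 0. Proof. by rewrite /phi !scale0r addr0. Qed.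
Lemma phi_eq a b c d : a = c -> b = d -> phi a b = phi c d.
Proof. by move=> -> ->. Qed.
Ltac lin := rewrite ?ex ?ey ?e0; do 6 rewrite ?phiZ ?phiN ?phiD; apply: phi_eq; ring.

Lemma cubic_from_D (g : X -> Y) (godd : forall u, g (-u) = - g u)
  (ghom : forall u, g (2 *: u) = 8 *: g u) (hE : forall u v, Dmap g u v = 0) :
  g (x + 2 *: y) - 3 *: g (x + y) + 3 *: g x - g (x - y) = 6 *: g y.
Proof.
have h1 := hE (y - x) (x + y). have h2 := hE (- x - y) (x - y).
rewrite /Dmap in h1 h2.
rewrite (_ : y - x + 3 *: (x + y) = 2 *: (x + 2 *: y)) in h1; last by lin.
rewrite (_ : 3 *: (y - x) + (x + y) = 2 *: (2 *: y - x)) in h1; last by lin.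
rewrite (_ : y - x + (x + y) = 2 *: y) in h1; last by lin.
rewrite (_ : y - x - (x + y) = - (2 *: x)) in h1; last by lin.
rewrite (_ : y - x = - (x - y)) in h1; last by lin.
rewrite (_ : 2 *: - (x - y) = - (2 *: (x - y))) in h1; last by lin.
rewrite (_ : - x - y + 3 *: (x - y) = - (2 *: (2 *: y - x))) in h2; last by lin.
rewrite (_ : 3 *: (- x - y) + (x - y) = - (2 *: (x + 2 *: y))) in h2; last by lin.
rewrite (_ : - x - y + (x - y) = - (2 *: y)) in h2; last by lin.
rewrite (_ : - x - y - (x - y) = - (2 *: x)) in h2; last by lin.
rewrite (_ : - x - y = - (x + y)) in h2; last by lin.
rewrite (_ : 2 *: - (x + y) = - (2 *: (x + y))) in h2; last by lin.
rewrite ?godd ?ghom in h1 h2.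
exact: (comb_cubic 0 0 h1 h2).
Qed.

Lemma cubic_props (g : X -> Y) : cubic g -> g 0 = 0 /\ g (- x) = - g x /\ g (2 *: x) = 8 *: g x.
Proof.
move=> hc.
have c0 := hc 0 0. have c1 := hc 0 x. have c2 := hc 0 (- x). have c3 := hc (- x) x.
rewrite (_ : 0 + 2 *: 0 = 0) in c0; last by lin.
rewrite (_ : 0 + 0 = 0) in c0; last by lin.
rewrite (_ : 0 - 0 = 0) in c0; last by lin.
rewrite (_ : 0 + 2 *: x = 2 *: x) in c1; last by lin.
rewrite (_ : 0 + x = x) in c1; last by lin.
rewrite (_ : 0 - x = - x) in c1; last by lin.
rewrite (_ : 0 + 2 *: - x = - (2 *: x)) in c2; last by lin.
rewrite (_ : 0 + - x = - x) in c2; last by lin.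
rewrite (_ : 0 - - x = x) in c2; last by lin.
rewrite (_ : - x + 2 *: x = x) in c3; last by lin.
rewrite (_ : - x + x = 0) in c3; last by lin.
rewrite (_ : - x - x = - (2 *: x)) in c3; last by lin.


have g0 : g 0 = 0 by exact: (comb_g0 0 0 0 0 0 0 0 c0).
have go : g (- x) = - g x by exact: (comb_odd 0 0 0 0 c2 c3).
split=> //; split=> //.
rewrite g0 scaler0 addr0 go in c1.
exact: (comb_hom 0 0 0 0 0 0 c1).
Qed.

Lemma Dmap_g (f : X -> Y) :
  Dmap (fun u => f (2 *: u) - 2 *: f u) x y = Dmap f (2 *: x) (2 *: y) - 2 *: Dmap f x y.
Proof.
rewrite !Dmap_lc lcAZ lcAN lcA; apply: lc_atoms_eq; congr (f _ + _); lin.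
Qed.

Lemma Dmap_scale (h : X -> Y) k t :
  Dmap (fun u => k *: h (t *: u)) x y = k *: Dmap h (t *: x) (t *: y).
Proof.
rewrite !Dmap_lc lcAZ; apply: lc_atoms_eq; congr (_ *: h _); lin.
Qed.

Lemma Dmap_key (f : X -> Y) (f0 : f 0 = 0) :
  Dmap f y y = 2 *: ((f (2 *: (2 *: y)) - 2 *: f (2 *: y)) - 8 *: (f (2 *: y) - 2 *: f y)).
Proof.
rewrite /Dmap.
rewrite (_ : y + 3 *: y = 2 *: (2 *: y)); last by lin.
rewrite (_ : 3 *: y + y = 2 *: (2 *: y)); last by lin.
rewrite (_ : y + y = 2 *: y); last by lin.
rewrite (_ : y - y = 0); last by lin.
rewrite f0 addr0.
exact: (comb_key _ _ _ 0 0 0 0 0).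
Qed.
End Phi.
Section Core.
Variables (R : realType) (Y : completeNormedModType R).

Lemma sumE (b : nat -> R) : series b = (fun n => \sum_(k < n) b k).
Proof. by apply/funext => n; rewrite /series /= big_mkord. Qed.

Lemma seq_cvg_bound (a : nat -> Y) (b : nat -> R) :
  (forall n, 0 <= b n) -> cvgn (fun n => \sum_(k < n) b k) ->
  (forall n, `|a n.+1 - a n| <= b n) ->
  cvgn a /\ `|a 0%N - limn a| <= limn (fun n => \sum_(k < n) b k).
Proof.
move=> b0 cb hab.
rewrite -sumE in cb *.
have cn : cvgn [normed series (telescope a)].
  apply: (series_le_cvg _ b0 _ cb) => n /=; first exact: normr_ge0.
  exact: hab.
have cd := normed_cvg cn.
have aE : a = (fun n => a 0%N + series (telescope a) n).
  by apply/funext => n; rewrite -eq_sum_telescope.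
have ca : cvgn a.
  rewrite aE; apply: is_cvgD; [exact: is_cvg_cst | exact: cd].
split => //.
rewrite {2}aE limD //; last exact: is_cvg_cst.
rewrite lim_cst.
have e : forall u v : Y, u - (u + v) = - v by move=> u v; rewrite opprD addrA subrr add0r.
rewrite e normrN.
apply: le_trans (lim_series_norm cn) _.
apply: lim_series_le => //= n; exact: hab.
exact: norm_hausdorff.
Qed.
End Core.

Unset Implicit Arguments.
Section Gen.
Variables (R : realType) (X : normedModType R) (Y : completeNormedModType R).
Variables (g : X -> Y) (c s : R) (b : X -> nat -> R).
Hypotheses (c0 : 0 <= c) (b0 : forall x n, 0 <= b x n)
  (bs : forall x, cvgn (fun n => \sum_(k < n) b x k))
  (hb : forall x n, `|c ^+ n.+1 *: g (s ^+ n.+1 *: x) - c ^+ n *: g (s ^+ n *: x)| <= b x n).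

Definition Lim x := limn (fun n => c ^+ n *: g (s ^+ n *: x)).
Definition Mb x := limn (fun n => \sum_(k < n) b x k).

Lemma Lim_cvg x : (fun n => c ^+ n *: g (s ^+ n *: x)) @ \oo --> Lim x.
Proof. by have [h _] := seq_cvg_bound (b0 x) (bs x) (hb x). Qed.

Lemma Lim_bound x : `|g x - Lim x| <= Mb x.
Proof.
have [_ h] := seq_cvg_bound (b0 x) (bs x) (hb x).
by move: h; rewrite expr0 !scale1r.
Qed.

Lemma Lim_inv x : c *: Lim (s *: x) = Lim x.
Proof.
apply: (cvg_unique _ _ (Lim_cvg x)); first exact: norm_hausdorff.
rewrite /= -cvg_shiftS /=.
have -> : (fun n => c ^+ n.+1 *: g (s ^+ n.+1 *: x)) =
   c \*: (fun n => c ^+ n *: g (s ^+ n *: (s *: x))).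
  by apply/funext => n; rewrite /= scalerA -exprS scalerA -exprSr.
exact: cvgZl_tmp (Lim_cvg _).
Qed.
Lemma Lim_odd (godd : forall u, g (- u) = - g u) x : Lim (- x) = - Lim x.
Proof.
apply: (cvg_unique _ (Lim_cvg (- x))); first exact: norm_hausdorff.
rewrite /=.
have -> : (fun n => c ^+ n *: g (s ^+ n *: - x)) = - (fun n => c ^+ n *: g (s ^+ n *: x)).
  by apply/funext => n; rewrite /= scalerN godd scalerN.
exact: cvgN (Lim_cvg x).
Qed.

Hypothesis hbs : forall x n k, c ^+ n * b (s ^+ n *: x) k = b x (k + n)%N.

Lemma sum_shift x n m :
  \sum_(k < m + n) b x k - \sum_(k < n) b x k = \sum_(k < m) b x (k + n)%N.
Proof.
elim: m => [|m IH]; first by rewrite add0n subrr big_ord0.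
by rewrite addSn !big_ord_recr /= -IH addrAC.
Qed.

Lemma tail x n : c ^+ n * Mb (s ^+ n *: x) = Mb x - \sum_(k < n) b x k.
Proof.
have h1 : (fun m => c ^+ n * \sum_(k < m) b (s ^+ n *: x) k) @ \oo --> c ^+ n * Mb (s ^+ n *: x).
  exact: cvgMl_tmp (bs _).
have h2 : (fun m => c ^+ n * \sum_(k < m) b (s ^+ n *: x) k) @ \oo --> Mb x - \sum_(k < n) b x k.
  have -> : (fun m => c ^+ n * \sum_(k < m) b (s ^+ n *: x) k) =
     (fun m => \sum_(k < m + n) b x k - \sum_(k < n) b x k).
    apply/funext => m; rewrite sum_shift mulr_sumr.
    by apply: eq_bigr => k _; rewrite hbs.
  apply: cvgB; last exact: cvg_cst.
  by rewrite (cvg_shiftn n (fun m => \sum_(k < m) b x k)); exact: bs.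
exact: (cvg_unique _ h1 h2).
Qed.

Lemma Lim_unique (C1 C2 : X -> Y) :
  (forall x, c *: C1 (s *: x) = C1 x) -> (forall x, c *: C2 (s *: x) = C2 x) ->
  (forall x, `|g x - C1 x| <= Mb x) -> (forall x, `|g x - C2 x| <= Mb x) -> C1 = C2.
Proof.
move=> i1 i2 h1 h2; apply/funext => x.
have e n : C1 x - C2 x = c ^+ n *: (C1 (s ^+ n *: x) - C2 (s ^+ n *: x)).
  elim: n => [|n IH]; first by rewrite !expr0 !scale1r.
  by rewrite IH -(i1 (s ^+ n *: x)) -(i2 (s ^+ n *: x)) -scalerBr !scalerA -exprS -exprSr.

have bnd n : `|C1 x - C2 x| <= 2 * (Mb x - \sum_(k < n) b x k).
  rewrite (e n) normrZ ger0_norm ?exprn_ge0 // -tail mulrCA.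
  apply: ler_wpM2l; first exact: exprn_ge0.
  set y := s ^+ n *: x.
  rewrite (_ : C1 y - C2 y = (g y - C2 y) - (g y - C1 y)); last first.
    by rewrite opprB [RHS]addrC [RHS]addrA subrK.
  apply: le_trans (ler_normB _ _) _; rewrite mulr_natl mulr2n.
  exact: lerD (h2 _) (h1 _).
have cv : (fun n => 2 * (Mb x - \sum_(k < n) b x k)) @ \oo --> 0.
  rewrite [X in _ --> X](_ : 0 = 2 * (Mb x - Mb x)); last by rewrite subrr mulr0.
  apply: cvgMl_tmp; apply: cvgB; [exact: cvg_cst | exact: (bs x)].
have : `|C1 x - C2 x| <= limn (fun n => 2 * (Mb x - \sum_(k < n) b x k)).
  apply: limr_ge; first exact: cvgP cv.
  by near=> n; exact: bnd.
rewrite (cvg_lim _ cv); last exact: Rhausdorff.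
by rewrite normr_le0 subr_eq0 => /eqP.
Unshelve. all: by end_near.
Qed.
End Gen.

Definition gof {R : numDomainType} {X Y : lmodType R} (f : X -> Y) (u : X) : Y :=
  f (2 *: u) - 2 *: f u.

Lemma lc_cvg (R : realType) (Y : completeNormedModType R) (A1 A2 A3 A4 A5 A6 A7 A8 : nat -> Y)
  (a1 a2 a3 a4 a5 a6 a7 a8 : Y) (r1 r2 r3 r4 r5 r6 r7 r8 : R) :
  A1 @ \oo --> a1 -> A2 @ \oo --> a2 -> A3 @ \oo --> a3 -> A4 @ \oo --> a4 ->
  A5 @ \oo --> a5 -> A6 @ \oo --> a6 -> A7 @ \oo --> a7 -> A8 @ \oo --> a8 ->
  (fun n => lc (A1 n) (A2 n) (A3 n) (A4 n) (A5 n) (A6 n) (A7 n) (A8 n) r1 r2 r3 r4 r5 r6 r7 r8)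
    @ \oo --> lc a1 a2 a3 a4 a5 a6 a7 a8 r1 r2 r3 r4 r5 r6 r7 r8.
Proof.
move=> h1 h2 h3 h4 h5 h6 h7 h8; rewrite /lc.
repeat (first [apply: cvgD | apply: cvgZl_tmp]); assumption.
Qed.

Section DL.
Variables (R : realType) (X : normedModType R) (Y : completeNormedModType R).
Variables (f : X -> Y) (phi : X -> X -> R) (c s : R) (L : X -> Y).
Hypotheses (c0 : 0 <= c) (hD : forall u v, `|Dmap f u v| <= phi u v)
  (hlim : forall x y, (fun n => c ^+ n * phi (s ^+ n *: x) (s ^+ n *: y)) @ \oo --> 0)
  (hL : forall x, (fun n => c ^+ n *: gof f (s ^+ n *: x)) @ \oo --> L x).

Lemma DL x y : Dmap L x y = 0.
Proof.
pose h := fun n => Dmap (fun u => c ^+ n *: gof f (s ^+ n *: u)) x y.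
have h1 : h @ \oo --> Dmap L x y.
  have -> : h = (fun n => lc (c ^+ n *: gof f (s ^+ n *: (x + 3 *: y)))
     (c ^+ n *: gof f (s ^+ n *: (3 *: x + y))) (c ^+ n *: gof f (s ^+ n *: (x + y)))
     (c ^+ n *: gof f (s ^+ n *: (x - y))) (c ^+ n *: gof f (s ^+ n *: x))
     (c ^+ n *: gof f (s ^+ n *: y)) (c ^+ n *: gof f (s ^+ n *: (2 *: y)))
     (c ^+ n *: gof f (s ^+ n *: (2 *: x))) 3 (-1) (-12) (-12) 16 16 (-12) 4).
    by apply/funext => n; rewrite /h Dmap_lc.
  rewrite Dmap_lc; apply: lc_cvg; exact: hL.
have h2 : h @ \oo --> 0.
  apply: norm_cvg0.
  apply: (squeeze_cvgr (f := fun _ => 0)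
    (h := fun n => c ^+ n * phi (s ^+ n *: (2 *: x)) (s ^+ n *: (2 *: y)) +
                   2 * (c ^+ n * phi (s ^+ n *: x) (s ^+ n *: y)))).
  - near=> n; apply/andP; split; first exact: normr_ge0.
    rewrite /h Dmap_scale normrZ ger0_norm ?exprn_ge0 //.
    rewrite mulrCA -mulrDr; apply: ler_wpM2l; first exact: exprn_ge0.
    rewrite /gof Dmap_g.
    rewrite (_ : 2 *: (s ^+ n *: x) = s ^+ n *: (2 *: x)); last by rewrite !scalerA mulrC.
    rewrite (_ : 2 *: (s ^+ n *: y) = s ^+ n *: (2 *: y)); last by rewrite !scalerA mulrC.
    apply: le_trans (ler_normB _ _) _; apply: lerD; first exact: hD.
    by rewrite normrZ ger0_norm // ler_wpM2l.
  - exact: cvg_cst.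
  - rewrite [X in _ --> X](_ : 0 = 0 + 2 * 0); last by rewrite mulr0 addr0.
    apply: cvgD; first exact: hlim.
    by apply: cvgMl_tmp; exact: hlim.
exact: (cvg_unique _ h1 h2).
Unshelve. all: by end_near.
Qed.
End DL.

Lemma main_gen (R : realType) (X : normedModType R) (Y : completeNormedModType R)
  (f : X -> Y) (phi : X -> X -> R) (c s : R) (b : X -> nat -> R)
  (c0 : 0 <= c) (f_odd : forall x, f (- x) = - f x)
  (hD : forall u v, `|Dmap f u v| <= phi u v)
  (hlim : forall x y, (fun n => c ^+ n * phi (s ^+ n *: x) (s ^+ n *: y)) @ \oo --> 0)
  (b0 : forall x n, 0 <= b x n) (bs : forall x, cvgn (fun n => \sum_(k < n) b x k))
  (hb : forall x n, `|c ^+ n.+1 *: gof f (s ^+ n.+1 *: x) - c ^+ n *: gof f (s ^+ n *: x)| <= b x n)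
  (hbs : forall x n k, c ^+ n * b (s ^+ n *: x) k = b x (k + n)%N)
  (inv_hom : forall C : X -> Y, (forall x, c *: C (s *: x) = C x) -> forall x, C (2 *: x) = 8 *: C x)
  (hom_inv : forall C : X -> Y, (forall x, C (2 *: x) = 8 *: C x) -> forall x, c *: C (s *: x) = C x) :
  exists C : X -> Y,
   [/\ forall x, (fun n => c ^+ n *: gof f (s ^+ n *: x)) @ \oo --> C x,
     cubic C,
     (forall x y, 3 *: C (x + 3 *: y) - C (3 *: x + y)
        = 12 *: (C (x + y) + C (x - y)) - 16 *: (C x + C y) + 12 *: C (2 *: y) - 4 *: C (2 *: x)),
     (forall x, `|gof f x - C x| <= Mb R X b x) &
     forall C' : X -> Y, cubic C' ->
       (forall x y, 3 *: C' (x + 3 *: y) - C' (3 *: x + y)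
        = 12 *: (C' (x + y) + C' (x - y)) - 16 *: (C' x + C' y) + 12 *: C' (2 *: y) - 4 *: C' (2 *: x)) ->
       (forall x, `|gof f x - C' x| <= Mb R X b x) -> C' = C].
Proof.
pose L := Lim R X Y (gof f) c s.
have Lc := Lim_cvg R X Y (gof f) c s b b0 bs hb.
have godd : forall u, gof f (- u) = - gof f u.
  by move=> u; rewrite /gof scalerN !f_odd scalerN opprD.
have Lodd := Lim_odd R X Y (gof f) c s b b0 bs hb godd.
have Linv := Lim_inv R X Y (gof f) c s b b0 bs hb.
have Lhom := inv_hom L Linv.
have DL0 := DL R X Y f phi c s L c0 hD hlim Lc.
have Lcub : cubic L by move=> x y; exact: (cubic_from_D x y Lodd Lhom DL0).
have Lb := Lim_bound R X Y (gof f) c s b b0 bs hb.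
exists L; split => //.
- by move=> x y; have := DL0 x y; rewrite /Dmap; exact: comb_Drearr.
- move=> C' hC' _ hb'.
  have C'hom : forall x, C' (2 *: x) = 8 *: C' x.
    by move=> x; have [_ [_ ->]] := cubic_props x x hC'.
  exact: (Lim_unique R X Y (gof f) c s b c0 bs hbs C' L (hom_inv _ C'hom) Linv hb' Lb).
Qed.
Unset Implicit Arguments.
Lemma zP (R : realType) (x : R) (z : int) (n : nat) : z = n%:Z -> x ^ z = x ^+ n.
Proof. by move=> ->; rewrite -exprnP. Qed.
Lemma zN (R : realType) (x : R) (z : int) (n : nat) : z = - n%:Z -> x ^ z = (x ^+ n)^-1.
Proof. by move=> ->; rewrite -exprnN. Qed.
Lemma t1 (n : nat) : (1 * (n%:Z - 1) = (n.-1)%:Z) \/ n = 0%N.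
Proof. case: n => [|n]; [by right | left => /=; lia]. Qed.
Lemma t2 (n : nat) : (-1 * (n%:Z + -1) = - (n.-1)%:Z) \/ n = 0%N.
Proof. case: n => [|n]; [by right | left => /=; lia]. Qed.
Lemma t3 (n : nat) : (-1 * (n%:Z - -1) = - (n.+1)%:Z).
Proof. lia. Qed.
Lemma t4 (n : nat) : (absz (1 - 1)%R)./2 = 0%N. Proof. by []. Qed.
Lemma t5 : (absz (-1 - 1)%R)./2 = 1%N. Proof. by []. Qed.
Lemma f0_of (R : realType) (X : normedModType R) (Y : completeNormedModType R) (f : X -> Y)
  (f_odd : forall x, f (- x) = - f x) : f 0 = 0.
Proof.
have h := f_odd 0; rewrite oppr0 in h.
have : (2 : R) *: f 0 = 0 by rewrite scaler_nat mulr2n {1}h addNr.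
by move/eqP; rewrite scaler_eq0 pnatr_eq0 /= => /eqP.
Qed.
Lemma key_of (R : realType) (X : normedModType R) (Y : completeNormedModType R) (f : X -> Y)
  (phi : X -> X -> R) (f0 : f 0 = 0) (hD : forall x y, `|Dmap f x y| <= phi x y) y :
  `|gof f (2 *: y) - 8 *: gof f y| <= phi y y / 2.
Proof.
have := hD y y; rewrite (Dmap_key y y f0) normrZ ger0_norm // /gof => h.
lra.
Qed.

Lemma cvg_shift_scale (R : realType) (u : nat -> R) (k : R) :
  cvgn u -> cvgn (fun n => u n.+1 * k).
Proof.
move=> h; apply: (cvgP (limn u * k)); apply: cvgMr_tmp.
by rewrite (cvg_shiftS u). 
Qed.

Lemma lim_half (R : realType) (u S : nat -> R) :
  (forall n, u n = 2 * S n) -> cvgn S -> 2^-1 * limn u = limn S.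
Proof.
move=> hu cS; rewrite (_ : u = fun n => 2 * S n); last by apply/funext.
rewrite (cvg_lim _ (cvgMl_tmp (a := 2) cS)); last exact: Rhausdorff.
by rewrite mulKf.
Qed.

Lemma lim_half_shift (R : realType) (u S : nat -> R) :
  (forall n, u n.+1 = 2 * S n) -> cvgn S -> 2^-1 * limn u = limn S.
Proof.
move=> hu cS.
have h : u @ \oo --> 2 * limn S.
  rewrite -cvg_shiftS (_ : (fun n => u n.+1) = fun n => 2 * S n); last by apply/funext.
  exact: cvgMl_tmp cS.
by rewrite (cvg_lim _ h) ?mulKf //; exact: Rhausdorff.
Qed.

Lemma cvg_unshift (R : realType) (u : nat -> R) : cvgn (fun n => u n.+1) -> cvgn u.
Proof.
move=> h; apply: (cvgP (limn (fun n => u n.+1))).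
by rewrite -cvg_shiftS.
Qed.

Lemma cvg_shift_affine (R : realType) (u : nat -> R) (a k : R) :
  cvgn u -> cvgn (fun n => (a + u n.+1) * k).
Proof.
move=> h; apply: (cvgP ((a + limn u) * k)); apply: cvgMr_tmp.
apply: cvgD; first exact: cvg_cst.
by rewrite (cvg_shiftS u).
Qed.
Lemma case1 (R : realType) (X : normedModType R)
  (Y : completeNormedModType R) (f : X -> Y) (phi : X -> X -> R)
  (phi_ge0 : forall x y, 0 <= phi x y)
  (f_odd : forall x, f (- x) = - f x)
  (hD : forall x y, `|Dmap f x y| <= phi x y)
  (hsum : forall x, cvgn (fun n : nat =>
     \sum_(1 <= i < n) (8 : R) ^ (i%:Z * 1)
        * phi ((2 ^ (i%:Z * 1))^-1 *: x) ((2 ^ (i%:Z * 1))^-1 *: x)))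
  (hlim : forall x y, (fun n : nat =>
     (8 : R) ^ (1 * n%:Z) * phi ((2 ^ (1 * n%:Z))^-1 *: x) ((2 ^ (1 * n%:Z))^-1 *: y))
     @ \oo --> 0) :
  exists C : X -> Y,
    [/\ forall x, (fun n : nat =>
           (8 : R) ^ (1 * n%:Z) *: (f ((2 ^ (1 * (n%:Z - 1)))^-1 *: x)
                                    - 2 *: f ((2 ^ (1 * n%:Z))^-1 *: x))) @ \oo --> C x,
        cubic C,
        (forall x y, 3 *: C (x + 3 *: y) - C (3 *: x + y)
            = 12 *: (C (x + y) + C (x - y)) - 16 *: (C x + C y)
              + 12 *: C (2 *: y) - 4 *: C (2 *: x)),
        (forall x, `|f (2 *: x) - 2 *: f x - C x|
            <= 2^-1 * limn (fun n : nat =>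
                 \sum_((absz (1 - 1)%R)./2 <= i < n) (8 : R) ^ (i%:Z * 1)
                   * phi ((2 ^ (1 * (i%:Z + 1)))^-1 *: x) ((2 ^ (1 * (i%:Z + 1)))^-1 *: x)))
      & forall C' : X -> Y, cubic C' ->
          (forall x y, 3 *: C' (x + 3 *: y) - C' (3 *: x + y)
            = 12 *: (C' (x + y) + C' (x - y)) - 16 *: (C' x + C' y)
              + 12 *: C' (2 *: y) - 4 *: C' (2 *: x)) ->
          (forall x, `|f (2 *: x) - 2 *: f x - C' x|
            <= 2^-1 * limn (fun n : nat =>
                 \sum_((absz (1 - 1)%R)./2 <= i < n) (8 : R) ^ (i%:Z * 1)
                   * phi ((2 ^ (1 * (i%:Z + 1)))^-1 *: x) ((2 ^ (1 * (i%:Z + 1)))^-1 *: x))) ->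
          C' = C].
Proof.
have f0 := @f0_of R X Y f f_odd.
have key := @key_of R X Y f phi f0 hD.
pose s : R := 2^-1.
have two0 : (2 : R) != 0 by rewrite pnatr_eq0.
pose b x n := 8 ^+ n * (phi (s ^+ n.+1 *: x) (s ^+ n.+1 *: x) / 2).
have c0 : (0 : R) <= 8 by [].
have sn : forall (x : X) (n : nat), s ^+ n *: x = 2 *: (s ^+ n.+1 *: x).
  by move=> x n; rewrite scalerA exprS mulrA mulfV // mul1r.
have hb : forall (x : X) (n : nat), `|8 ^+ n.+1 *: gof f (s ^+ n.+1 *: x) - 8 ^+ n *: gof f (s ^+ n *: x)| <= b x n.
  move=> x n; rewrite (sn x n) exprSr -scalerA -scalerBr normrZ ger0_norm ?exprn_ge0 //.
  apply: ler_wpM2l; first exact: exprn_ge0.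
  by rewrite distrC; exact: key.
have b0 : forall (x : X) (n : nat), 0 <= b x n.
  by move=> x n; apply: mulr_ge0; [exact: exprn_ge0 | apply: divr_ge0].
have hbs : forall (x : X) (n k : nat), 8 ^+ n * b (s ^+ n *: x) k = b x (k + n)%N.
  move=> x n k; rewrite /b scalerA -exprD mulrA -exprD addnC addSn.
  by rewrite addnC.
have bs : forall x : X, cvgn (fun n => \sum_(k < n) b x k).
  move=> x.
  pose T := fun n : nat => \sum_(1 <= i < n) (8 : R) ^ (i%:Z * 1)
        * phi ((2 ^ (i%:Z * 1))^-1 *: x) ((2 ^ (i%:Z * 1))^-1 *: x).
  have -> : (fun n => \sum_(k < n) b x k) = (fun n => T n.+1 * 16^-1).
    apply/funext => n; rewrite /T big_add1 /= big_mkord mulr_suml.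
    apply: eq_bigr => i _; rewrite mulr1 -!exprnP /b /s exprVn.
    by rewrite (exprS (8 : R) i); field.
  exact (cvg_shift_scale R T (16^-1) (hsum x)).
have hlim' : forall x y : X, (fun n => 8 ^+ n * phi (s ^+ n *: x) (s ^+ n *: y)) @ \oo --> 0.
  move=> x y; have := hlim x y.
  have -> : (fun n : nat => (8 : R) ^ (1 * n%:Z) * phi ((2 ^ (1 * n%:Z))^-1 *: x) ((2 ^ (1 * n%:Z))^-1 *: y)) =
     (fun n => 8 ^+ n * phi (s ^+ n *: x) (s ^+ n *: y)).
    by apply/funext => n; rewrite mul1r -!exprnP /s exprVn.
  by [].
have inv_hom : forall C : X -> Y, (forall x, 8 *: C (s *: x) = C x) -> forall x, C (2 *: x) = 8 *: C x.
  by move=> C h x; rewrite -(h (2 *: x)) scalerA mulVf ?scale1r.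
have hom_inv : forall C : X -> Y, (forall x, C (2 *: x) = 8 *: C x) -> forall x, 8 *: C (s *: x) = C x.
  by move=> C h x; rewrite -h scalerA mulfV ?scale1r.
have [C [Cc Ccub Crearr Cb Cuniq]] :=
  main_gen R X Y f phi 8 s b c0 f_odd hD hlim' b0 bs hb hbs inv_hom hom_inv.
have hM : forall x, 2^-1 * limn (fun n : nat =>
                 \sum_((absz (1 - 1)%R)./2 <= i < n) (8 : R) ^ (i%:Z * 1)
                   * phi ((2 ^ (1 * (i%:Z + 1)))^-1 *: x) ((2 ^ (1 * (i%:Z + 1)))^-1 *: x))
     = Mb R X b x.
  move=> x; apply: (lim_half R); last exact: bs.
  move=> n; rewrite big_mkord mulr_sumr; apply: eq_bigr => i _.
  rewrite (zP _ _ (i%:Z * 1) i); last by lia.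
  rewrite (zP _ _ _ i.+1); last by lia.
  by rewrite /b /s exprVn; field.
exists C; split => //.
- move=> x.
  have -> : (fun n : nat => (8 : R) ^ (1 * n%:Z) *: (f ((2 ^ (1 * (n%:Z - 1)))^-1 *: x)
                                    - 2 *: f ((2 ^ (1 * n%:Z))^-1 *: x))) =
      (fun n => 8 ^+ n *: gof f (s ^+ n *: x)); last exact: Cc.
  apply/funext => n; rewrite mul1r -exprnP /gof /s exprVn; congr (_ *: (f _ - _)).
  case: n => [|n].
    rewrite (zN _ _ _ 1); last by lia.
    by rewrite expr1 invrK expr0 invr1 !scale1r.
  rewrite (zP _ _ _ n); last by lia.
  by rewrite scalerA exprS invfM mulrA mulfV ?mul1r.
- by move=> x; rewrite hM; exact: Cb.
- move=> C' h1 h2 h3; apply: Cuniq => // x; rewrite -hM; exact: h3.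
Qed.
Lemma case2 (R : realType) (X : normedModType R)
  (Y : completeNormedModType R) (f : X -> Y) (phi : X -> X -> R)
  (phi_ge0 : forall x y, 0 <= phi x y)
  (f_odd : forall x, f (- x) = - f x)
  (hD : forall x y, `|Dmap f x y| <= phi x y)
  (hsum : forall x, cvgn (fun n : nat =>
     \sum_(1 <= i < n) (8 : R) ^ (i%:Z * (-1))
        * phi ((2 ^ (i%:Z * (-1)))^-1 *: x) ((2 ^ (i%:Z * (-1)))^-1 *: x)))
  (hlim : forall x y, (fun n : nat =>
     (8 : R) ^ ((-1) * n%:Z) * phi ((2 ^ ((-1) * n%:Z))^-1 *: x) ((2 ^ ((-1) * n%:Z))^-1 *: y))
     @ \oo --> 0) :
  exists C : X -> Y,
    [/\ forall x, (fun n : nat =>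
           (8 : R) ^ ((-1) * n%:Z) *: (f ((2 ^ ((-1) * (n%:Z - (-1))))^-1 *: x)
                                    - 2 *: f ((2 ^ ((-1) * n%:Z))^-1 *: x))) @ \oo --> C x,
        cubic C,
        (forall x y, 3 *: C (x + 3 *: y) - C (3 *: x + y)
            = 12 *: (C (x + y) + C (x - y)) - 16 *: (C x + C y)
              + 12 *: C (2 *: y) - 4 *: C (2 *: x)),
        (forall x, `|f (2 *: x) - 2 *: f x - C x|
            <= 2^-1 * limn (fun n : nat =>
                 \sum_((absz ((-1) - 1)%R)./2 <= i < n) (8 : R) ^ (i%:Z * (-1))
                   * phi ((2 ^ ((-1) * (i%:Z + (-1))))^-1 *: x) ((2 ^ ((-1) * (i%:Z + (-1))))^-1 *: x)))
      & forall C' : X -> Y, cubic C' ->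
          (forall x y, 3 *: C' (x + 3 *: y) - C' (3 *: x + y)
            = 12 *: (C' (x + y) + C' (x - y)) - 16 *: (C' x + C' y)
              + 12 *: C' (2 *: y) - 4 *: C' (2 *: x)) ->
          (forall x, `|f (2 *: x) - 2 *: f x - C' x|
            <= 2^-1 * limn (fun n : nat =>
                 \sum_((absz ((-1) - 1)%R)./2 <= i < n) (8 : R) ^ (i%:Z * (-1))
                   * phi ((2 ^ ((-1) * (i%:Z + (-1))))^-1 *: x) ((2 ^ ((-1) * (i%:Z + (-1))))^-1 *: x))) ->
          C' = C].
Proof.
have f0 := @f0_of R X Y f f_odd.
have key := @key_of R X Y f phi f0 hD.
pose c : R := 8^-1.
have eight0 : (8 : R) != 0 by rewrite pnatr_eq0.
pose b (x : X) (n : nat) := c ^+ n.+1 * (phi (2 ^+ n *: x) (2 ^+ n *: x) / 2).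
have c0 : (0 : R) <= c by rewrite /c invr_ge0.
have hb : forall (x : X) (n : nat),
    `|c ^+ n.+1 *: gof f (2 ^+ n.+1 *: x) - c ^+ n *: gof f (2 ^+ n *: x)| <= b x n.
  move=> x n; set y := 2 ^+ n *: x.
  rewrite (_ : 2 ^+ n.+1 *: x = 2 *: y); last by rewrite /y scalerA exprS.
  rewrite (_ : c ^+ n *: gof f y = c ^+ n.+1 *: (8 *: gof f y)); last first.
    by rewrite scalerA exprSr -mulrA /c mulVf ?mulr1.
  rewrite -scalerBr normrZ ger0_norm ?exprn_ge0 //.
  apply: ler_wpM2l; first exact: exprn_ge0.
  exact: key.
have b0 : forall (x : X) (n : nat), 0 <= b x n.
  by move=> x n; apply: mulr_ge0; [exact: exprn_ge0 | apply: divr_ge0].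
have hbs : forall (x : X) (n k : nat), c ^+ n * b (2 ^+ n *: x) k = b x (k + n)%N.
  move=> x n k; rewrite /b scalerA -exprD mulrA -exprD (addnC n) addSn.
  by [].
have bs : forall x : X, cvgn (fun n => \sum_(k < n) b x k).
  move=> x.
  pose T := fun n : nat => \sum_(1 <= i < n) (8 : R) ^ (i%:Z * -1)
        * phi ((2 ^ (i%:Z * -1))^-1 *: x) ((2 ^ (i%:Z * -1))^-1 *: x).
  apply: (cvg_unshift R).
  have -> : (fun n => \sum_(k < n.+1) b x k) = (fun n => (phi x x + T n.+1) * 16^-1).
    apply/funext => n; rewrite /T big_ord_recl big_add1 /= big_mkord mulrDl mulr_suml.
    congr (_ + _).
      by rewrite /b expr0 scale1r expr1 /c; field.
    apply: eq_bigr => i _.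
    rewrite (zN _ _ _ i.+1); last by lia.
    rewrite (zN _ _ _ i.+1); last by lia.
    rewrite invrK -exprVn /b /= -/c (exprS c i.+1) /c; by field.
  exact: (cvg_shift_affine R T _ _ (hsum x)).
have hlim' : forall x y : X, (fun n => c ^+ n * phi (2 ^+ n *: x) (2 ^+ n *: y)) @ \oo --> 0.
  move=> x y; have := hlim x y.
  have -> : (fun n : nat => (8 : R) ^ (-1 * n%:Z) * phi ((2 ^ (-1 * n%:Z))^-1 *: x) ((2 ^ (-1 * n%:Z))^-1 *: y)) =
     (fun n => c ^+ n * phi (2 ^+ n *: x) (2 ^+ n *: y)).
    apply/funext => n.
    rewrite (zN _ _ _ n); last by lia.
    rewrite (zN _ _ _ n); last by lia.
    by rewrite invrK /c exprVn.
  by [].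
have inv_hom : forall C : X -> Y, (forall x, c *: C (2 *: x) = C x) -> forall x, C (2 *: x) = 8 *: C x.
  by move=> C h x; rewrite -(h x) scalerA /c mulfV ?scale1r.
have hom_inv : forall C : X -> Y, (forall x, C (2 *: x) = 8 *: C x) -> forall x, c *: C (2 *: x) = C x.
  by move=> C h x; rewrite h scalerA /c mulVf ?scale1r.
have [C [Cc Ccub Crearr Cb Cuniq]] :=
  main_gen R X Y f phi c 2 b c0 f_odd hD hlim' b0 bs hb hbs inv_hom hom_inv.
have hM : forall x, 2^-1 * limn (fun n : nat =>
                 \sum_((absz (-1 - 1)%R)./2 <= i < n) (8 : R) ^ (i%:Z * -1)
                   * phi ((2 ^ (-1 * (i%:Z + -1)))^-1 *: x) ((2 ^ (-1 * (i%:Z + -1)))^-1 *: x))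
     = Mb R X b x.
  move=> x; apply: (lim_half_shift R); last exact: bs.
  move=> n; rewrite t5 big_add1 /= big_mkord mulr_sumr; apply: eq_bigr => i _.
  rewrite (zN _ _ _ i.+1); last by lia.
  rewrite (zN _ _ _ i); last by lia.
  by rewrite invrK -exprVn /b -/c; field.
exists C; split => //.
- move=> x.
  have -> : (fun n : nat => (8 : R) ^ (-1 * n%:Z) *: (f ((2 ^ (-1 * (n%:Z - -1)))^-1 *: x)
                                    - 2 *: f ((2 ^ (-1 * n%:Z))^-1 *: x))) =
      (fun n => c ^+ n *: gof f (2 ^+ n *: x)); last exact: Cc.
  apply/funext => n.
  rewrite (zN _ _ _ n); last by lia.
  rewrite (zN _ _ _ n.+1); last by lia.
  rewrite (zN _ _ _ n); last by lia.
  by rewrite !invrK -exprVn /gof exprS scalerA.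
- by move=> x; rewrite hM; exact: Cb.
- move=> C' h1 h2 h3; apply: Cuniq => // x; rewrite -hM; exact: h3.
Qed.

Theorem theorem3p2 (R : realType) (X : normedModType R)
  (Y : completeNormedModType R) (l : int) (hl : l = 1 \/ l = -1)
  (f : X -> Y) (phi : X -> X -> R)
  (phi_ge0 : forall x y, 0 <= phi x y)
  (f_odd : forall x, f (- x) = - f x)
  (hD : forall x y, `|Dmap f x y| <= phi x y)
  (hsum : forall x, cvgn (fun n : nat =>
     \sum_(1 <= i < n) (8 : R) ^ (i%:Z * l)
        * phi ((2 ^ (i%:Z * l))^-1 *: x) ((2 ^ (i%:Z * l))^-1 *: x)))
  (hlim : forall x y, (fun n : nat =>
     (8 : R) ^ (l * n%:Z) * phi ((2 ^ (l * n%:Z))^-1 *: x) ((2 ^ (l * n%:Z))^-1 *: y))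
     @ \oo --> 0) :
  exists C : X -> Y,
    [/\ forall x, (fun n : nat =>
           (8 : R) ^ (l * n%:Z) *: (f ((2 ^ (l * (n%:Z - l)))^-1 *: x)
                                    - 2 *: f ((2 ^ (l * n%:Z))^-1 *: x))) @ \oo --> C x,
        cubic C,
        (forall x y, 3 *: C (x + 3 *: y) - C (3 *: x + y)
            = 12 *: (C (x + y) + C (x - y)) - 16 *: (C x + C y)
              + 12 *: C (2 *: y) - 4 *: C (2 *: x)),
        (forall x, `|f (2 *: x) - 2 *: f x - C x|
            <= 2^-1 * limn (fun n : nat =>
                 \sum_((absz (l - 1)%R)./2 <= i < n) (8 : R) ^ (i%:Z * l)
                   * phi ((2 ^ (l * (i%:Z + l)))^-1 *: x) ((2 ^ (l * (i%:Z + l)))^-1 *: x)))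
      & forall C' : X -> Y, cubic C' ->
          (forall x y, 3 *: C' (x + 3 *: y) - C' (3 *: x + y)
            = 12 *: (C' (x + y) + C' (x - y)) - 16 *: (C' x + C' y)
              + 12 *: C' (2 *: y) - 4 *: C' (2 *: x)) ->
          (forall x, `|f (2 *: x) - 2 *: f x - C' x|
            <= 2^-1 * limn (fun n : nat =>
                 \sum_((absz (l - 1)%R)./2 <= i < n) (8 : R) ^ (i%:Z * l)
                   * phi ((2 ^ (l * (i%:Z + l)))^-1 *: x) ((2 ^ (l * (i%:Z + l)))^-1 *: x))) ->
          C' = C].

Proof.
case: hl => hl; subst l.
- exact: (case1 R X Y f phi phi_ge0 f_odd hD hsum hlim).
- exact: (case2 R X Y f phi phi_ge0 f_odd hD hsum hlim).
Qed.
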